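(* In the setting of the context, let $1\le i<j\le m$ be integers and $p',q$ arbitrary integers. Then $|s_i^{p'}s_j^{q}|_{S_m}=|p'|+|q|$.
   Context: $H$ is a finitely presented group with finite generating set $T$, containing a free subgroup $F$ of rank $p$ with free basis $\{d_1,\dots,d_p\}\subset T$ (standing assumption: $\mathrm{Dist}_F^H$ admits an exponentially bounded sequence of palindromic certificates in $F$). $F_x,F_y,F_z$ are free of rank $p$ with bases $R_x=\{x_i\},R_y=\{y_i\},R_z=\{z_i\}$. $G_1=[H\ast_{\langle d_i=x_iy_i^{-1}\rangle}(F_x\times F_y\times F_z)]\times\langle s_1\rangle$; $a_i=x_iz_i$, $b_i=y_iz_i$, $R_{xz}=\{a_i\}$, $R_{yz}=\{b_i\}$; $G_2=\langle G_1,s_2\mid s_2^{-1}a_is_2=b_i,\ 1\le i\le p\rangle$; $G_k=\langle G_{k-1},s_k\mid s_k^{-1}s_1s_k=s_{k-1}\rangle$ for $k\ge3$. $S_1=T\cup R_x\cup R_y\cup R_z\cup R_{xz}\cup R_{yz}\cup\{s_1\}$, $S_k=S_{k-1}\cup\{s_k\}$; $|\cdot|_{S_m}$ is word length in $G_m$. *)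

(* Defs.v *)
From mathcomp Require Import all_boot all_algebra.
Set Implicit Arguments. Unset Strict Implicit. Unset Printing Implicit Defensive.

(* A letter is a generator with an exponent flag: (g,false) = g, (g,true) = g^-1. *)
Definition letter (A : Type) := (A * bool)%type.
Definition word (A : Type) := seq (letter A).

Inductive weq (A : Type) (R : word A -> Prop) : word A -> word A -> Prop :=
| weq_refl w : weq R w w
| weq_sym u v : weq R u v -> weq R v u
| weq_trans u v w : weq R u v -> weq R v w -> weq R u w
| weq_free (u v : word A) (g : A) (b : bool) :
    weq R (u ++ (g, b) :: (g, ~~ b) :: v) (u ++ v)
| weq_rel (u v r : word A) : R r -> weq R (u ++ r ++ v) (u ++ v).

Definition is_word_length (A : Type) (R : word A -> Prop) (w : word A) (n : nat) :=
  (exists u : word A, weq R u w /\ size u = n) /\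
  (forall u : word A, weq R u w -> n <= size u).

Definition freely_reduced (A : Type) (w : word A) :=
  forall (u v : word A) (a : A) (b : bool), w <> u ++ (a, b) :: (a, ~~ b) :: v.

Definition pw (A : Type) (g : A) (k : int) : word A := nseq `|k|%N (g, (k < 0)%R).

Definition relH (T : finType) (RH : seq (word T)) : word T -> Prop :=
  fun r => r \in RH.

Definition free_basis (T : finType) (RH : seq (word T)) (p : nat) (d : 'I_p -> T) :=
  forall w : word 'I_p, freely_reduced w ->
    weq (relH RH) [seq (d l.1, l.2) | l <- w] [::] -> w = [::].

(* Generating set S_m of G_m:  T, x_i, y_i, z_i, a_i, b_i (i : 'I_p), and
   s_k for k : 'I_m, where the ordinal k stands for s_{k+1}. *)
Inductive gen (T : Type) (p m : nat) : Type :=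
| GT of T
| GX of 'I_p | GY of 'I_p | GZ of 'I_p
| GA of 'I_p | GB of 'I_p
| GS of 'I_m.

Definition lt (T : Type) (p m : nat) (g : gen T p m) : letter (gen T p m) := (g, false).
Definition lti (T : Type) (p m : nat) (g : gen T p m) : letter (gen T p m) := (g, true).

Definition commw (X : Type) (g h : X) : word X :=
  [:: (g, true); (h, true); (g, false); (h, false)].

Inductive relG (T : finType) (RH : seq (word T)) (p : nat) (d : 'I_p -> T) (m : nat)
  : word (gen T p m) -> Prop :=
| relG_H r : r \in RH -> relG RH d [seq (GT p m l.1, l.2) | l <- r]
(* amalgamation d_i = x_i y_i^-1 *)
| relG_amalg i : relG RH d [:: lt (GT p m (d i)); lt (GY T m i); lti (GX T m i)]
(* F_x x F_y x F_z *)
| relG_xy i j : relG RH d (commw (GX T m i) (GY T m j))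
| relG_xz i j : relG RH d (commw (GX T m i) (GZ T m j))
| relG_yz i j : relG RH d (commw (GY T m i) (GZ T m j))
(* the free products F_x, F_y, F_z need no relators *)
(* a_i = x_i z_i, b_i = y_i z_i *)
| relG_a i : relG RH d [:: lt (GA T m i); lti (GZ T m i); lti (GX T m i)]
| relG_b i : relG RH d [:: lt (GB T m i); lti (GZ T m i); lti (GY T m i)]
(* s_1 is central in G_1 (direct factor) *)
| relG_s1T (k : 'I_m) t : val k = 0 -> relG RH d (commw (GS T p k) (GT p m t))
| relG_s1X (k : 'I_m) i : val k = 0 -> relG RH d (commw (GS T p k) (GX T m i))
| relG_s1Y (k : 'I_m) i : val k = 0 -> relG RH d (commw (GS T p k) (GY T m i))
| relG_s1Z (k : 'I_m) i : val k = 0 -> relG RH d (commw (GS T p k) (GZ T m i))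
| relG_s1A (k : 'I_m) i : val k = 0 -> relG RH d (commw (GS T p k) (GA T m i))
| relG_s1B (k : 'I_m) i : val k = 0 -> relG RH d (commw (GS T p k) (GB T m i))
(* G_2: s_2^-1 a_i s_2 = b_i *)
| relG_s2 (k : 'I_m) i : val k = 1 ->
    relG RH d [:: lti (GS T p k); lt (GA T m i); lt (GS T p k); lti (GB T m i)]
(* G_k, k >= 3: s_k^-1 s_1 s_k = s_{k-1} *)
| relG_sk (k k1 k0 : 'I_m) : 2 <= val k -> val k0 = 0 -> val k1 = (val k).-1 ->
    relG RH d [:: lti (GS T p k); lt (GS T p k0); lt (GS T p k); lti (GS T p k1)].

(* Main.v *)
Require Import Defs.
From mathcomp Require Import all_boot all_algebra.
From mathcomp Require Import zify ring.
Set Implicit Arguments. Unset Strict Implicit. Unset Printing Implicit Defensive.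
Import GRing.Theory Num.Theory.
Local Open Scope ring_scope.

Definition invl (A : Type) (l : letter A) : letter A := (l.1, ~~ l.2).
Definition winv (A : Type) (w : word A) : word A := rev (map (@invl A) w).

Lemma winv_cons (A : Type) (l : letter A) w : winv (l :: w) = winv w ++ [:: invl l].
Proof. by rewrite /winv /= rev_cons cats1. Qed.

Lemma winvK (A : Type) (w : word A) : winv (winv w) = w.
Proof.
rewrite /winv map_rev revK -map_comp; elim: w => //= [[g b] w ->].
by rewrite /invl /= negbK.
Qed.

Lemma size_winv (A : Type) (w : word A) : size (winv w) = size w.
Proof. by rewrite /winv size_rev size_map. Qed.

Section W.
Variables (A : Type) (R : word A -> Prop).

Lemma weq_ctx u v a b : weq R u v -> weq R (a ++ u ++ b) (a ++ v ++ b).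
Proof.
elim=> {u v}.
- by move=> w; apply: weq_refl.
- by move=> u v _ IH; apply: weq_sym.
- by move=> u v w _ IH1 _ IH2; apply: weq_trans IH2.
- move=> u v g c.
  have := weq_free R (a ++ u) (v ++ b) g c.
  by rewrite -!catA /=.
- move=> u v r Hr.
  have := weq_rel (a ++ u) (v ++ b) Hr.
  by rewrite -!catA.
Qed.

Lemma weq_ctxl u v a : weq R u v -> weq R (a ++ u) (a ++ v).
Proof. by move=> /(weq_ctx a [::]); rewrite !cats0. Qed.

Lemma weq_cancel w v : weq R (w ++ winv w ++ v) v.
Proof.
elim: w v => [|[g c] w IH] v /=; first exact: weq_refl.
rewrite winv_cons -catA /=.
apply: weq_trans (weq_free R [::] v g c).
have := weq_ctx [:: (g, c)] [::] (IH ((g, ~~ c) :: v)).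
by rewrite !cats0 /=.
Qed.

Lemma weq_cancel' w v : weq R (winv w ++ w ++ v) v.
Proof. by have := weq_cancel (winv w) v; rewrite winvK. Qed.

End W.

Section Hsub.
Variables (A B : Type) (R : word A -> Prop) (R' : word B -> Prop).
Variables (delta : A -> int) (sigma : int -> A -> word B).

Definition dl (l : letter A) : int := if l.2 then - delta l.1 else delta l.1.
Definition emit (h : int) (l : letter A) : word B :=
  if l.2 then winv (sigma (h - delta l.1) l.1) else sigma h l.1.
Fixpoint Fw (h : int) (w : word A) : word B :=
  if w is l :: w' then emit h l ++ Fw (h + dl l) w' else [::].
Fixpoint Dw (w : word A) : int := if w is l :: w' then dl l + Dw w' else 0.

Lemma Dw_cat u v : Dw (u ++ v) = Dw u + Dw v.
Proof. by elim: u => [|l u IH] /=; rewrite ?add0r // IH addrA. Qed.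

Lemma Fw_cat h u v : Fw h (u ++ v) = Fw h u ++ Fw (h + Dw u) v.
Proof.
elim: u h => [|l u IH] h /=; first by rewrite addr0.
by rewrite IH catA addrA.
Qed.

Hypothesis HR : forall r, R r -> Dw r = 0 /\ forall h, weq R' (Fw h r) [::].

Lemma weq_F u v : weq R u v -> Dw u = Dw v /\ forall h, weq R' (Fw h u) (Fw h v).
Proof.
elim=> {u v}.
- by move=> w; split=> // h; apply: weq_refl.
- by move=> u v _ [E IH]; split=> // h; apply: weq_sym.
- move=> u v w _ [E1 IH1] _ [E2 IH2]; split; first by rewrite E1.
  by move=> h; apply: weq_trans (IH2 h).
- move=> u v g c; split.
    rewrite !Dw_cat /= /dl /=; case: c => /=; by rewrite ?addKr ?addNKr.
  move=> h; rewrite !Fw_cat /=.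
  apply: weq_ctxl.
  rewrite /emit /dl /=; case: c => /=; rewrite -?catA.
    rewrite subrK; exact: weq_cancel'.
  rewrite addrK; exact: weq_cancel.
- move=> u v r Hr; have [D0 Fr] := HR Hr; split.
    by rewrite !Dw_cat D0 add0r.
  move=> h; rewrite !Fw_cat D0 addr0.
  by have := weq_ctx (Fw h u) (Fw (h + Dw u) v) (Fr (h + Dw u)).
Qed.

Lemma size_Fw (Hs : forall h g, (size (sigma h g) <= 1)%N) h w :
  (size (Fw h w) <= size w)%N.
Proof.
elim: w h => [|l w IH] h //=.
rewrite size_cat -addn1 addnC leq_add //.
by rewrite /emit; case: l.2; rewrite ?size_winv Hs.
Qed.

Lemma Dw_nseq l n : dl l = 0 -> Dw (nseq n l) = 0.
Proof. by move=> H; elim: n => //= n ->; rewrite H addr0. Qed.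

End Hsub.

Lemma Fw_nseq (A : Type) (delta : A -> int) (sigma : int -> A -> word A) h l n :
  dl delta l = 0 -> emit delta sigma h l = [:: l] -> Fw delta sigma h (nseq n l) = nseq n l.
Proof. by move=> H1 H2; elim: n => //= n IH; rewrite H1 addr0 IH H2. Qed.

Section Conc.
Variables (T : Type) (p m : nat).
Notation G := (gen T p m).

Definition Rq (K : nat) : word G -> Prop := fun r =>
  exists a a1 a0 : 'I_m, [/\ (2 <= val a)%N, (val a < K)%N, val a0 = 0%N, val a1 = (val a).-1 &
   r = [:: lti (GS T p a); lt (GS T p a0); lt (GS T p a); lti (GS T p a1)]].

Definition delta0 (g : G) : int := 0.
Definition sigma0 (h : int) (g : G) : word G := if g is GS a then [:: lt (GS T p a)] else [::].

Lemma Dw0 (w : word G) : Dw delta0 w = 0.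
Proof. by elim: w => //= l w ->; rewrite /dl /delta0; case: l.2; rewrite ?oppr0 addr0. Qed.

Variables (t : nat) (x y : 'I_m).
Hypotheses (Hx : val x = 0%N) (Hy : val y = t.-1) (Ht2 : (2 <= t)%N).

Definition deltat (g : G) : int := if g is GS a then (if val a == t then 1 else 0) else 0.
Definition sigmat (h : int) (g : G) : word G :=
  if g is GS a then
    (if (t <= val a)%N then [::]
     else if h == 0 then [:: lt (GS T p a)]
     else if h == -1 then (if val a == t.-1 then [::] else [:: lt (GS T p y)])
     else if h == 1 then (if val a == t.-1 then [:: lt (GS T p x)] else [::])
     else [::])
  else [::].

Arguments sigmat : simpl never.

Lemma sigmat_size h g : (size (sigmat h g) <= 1)%N.
Proof. by rewrite /sigmat; case: g => // a; repeat case: ifP. Qed.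

Lemma key h (a0 a1 : 'I_m) : val a0 = 0%N -> val a1 = t.-1 ->
  sigmat (h - 1) (GS T p a0) = sigmat h (GS T p a1).
Proof.
move=> H0 H1.
have -> : a0 = x by apply: val_inj; rewrite /= H0 Hx.
have -> : a1 = y by apply: val_inj; rewrite /= H1 Hy.
rewrite /sigmat Hx Hy.
have -> : (t <= 0)%N = false by case: t Ht2.
have -> : (t <= t.-1)%N = false by case: t Ht2 => // n _; rewrite /= ltnn.
have -> : (0 == t.-1)%N = false by case: t Ht2 => // [[]].
by rewrite eqxx; repeat (case: ifP => ?); try by []; lia.
Qed.

Lemma stepHR r : Rq t.+1 r ->
  Dw deltat r = 0 /\ forall h, weq (Rq t) (Fw deltat sigmat h r) [::].
Proof.
case=> a [a1 [a0 [H2 Hlt H0 H1 ->]]].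
have n0 : (val a0 == t) = false by rewrite H0; case: t Ht2.
have n1 : (val a1 == t) = false by rewrite H1; apply/negbTE; rewrite neq_ltn; apply/orP; left; case: (val a) Hlt H2 => //= n; rewrite ltnS => /leq_ltn_trans; apply.
split.
  rewrite /= /dl /deltat /= n0 n1; case: ifP => _; lia.
move=> h; case: (eqVneq (val a) t) => Ha.
  rewrite /= /emit /dl /deltat /= n0 n1 Ha eqxx.
  have -> : h - 1 + 0 + 1 - 0 = h by ring.
  have Sa : forall k, sigmat k (GS T p a) = [::] by move=> k; rewrite /sigmat Ha leqnn.
  rewrite !Sa (@key _ a0 a1 H0); last by rewrite H1 Ha.
  rewrite /= cats0.
  by have := weq_cancel (Rq t) (sigmat h (GS T p a1)) [::]; rewrite cats0.
have lta : (val a < t)%N by rewrite ltn_neqAle Ha -ltnS.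
rewrite /= /emit /dl /deltat /= n0 n1 (negbTE Ha).
have -> : h - 0 + 0 + 0 - 0 = h by ring.
have -> : h - 0 + 0 = h by ring.
have -> : h - 0 = h by ring.
have f0 : (t <= val a0)%N = false by rewrite H0; case: t Ht2.
have f1 : (t <= val a1)%N = false by rewrite H1; lia.
have fa : (t <= val a)%N = false by apply/negbTE; rewrite -ltnNge.
have g0 : (val a0 == t.-1) = false by rewrite H0; case: t Ht2 => // [[]].
have g1 : (val a1 == t.-1) = false by rewrite H1; lia.
case: (eqVneq h 0) => h0.
  rewrite h0 /sigmat f0 f1 fa eqxx /=.
  have HR : Rq t [:: lti (GS T p a); lt (GS T p a0); lt (GS T p a); lti (GS T p a1)].
    by exists a, a1, a0; split.
  exact: (@weq_rel _ (Rq t) [::] [::] _ HR).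
set P := if h == -1 then [:: lt (GS T p y)] else [::].
have P0 : sigmat h (GS T p a0) = P by rewrite /sigmat /P f0 g0 (negbTE h0); repeat case: ifP => ?.
have P1 : sigmat h (GS T p a1) = P by rewrite /sigmat /P f1 g1 (negbTE h0); repeat case: ifP => ?.
have PS : [\/ sigmat h (GS T p a) = [::], sigmat h (GS T p a) = P | P = [::]].
  rewrite /sigmat /P fa (negbTE h0); repeat case: ifP => ?; try by [constructor 1|constructor 2|constructor 3]; lia.
rewrite P0 P1 cats0.
case: PS => [->|->|]; last first.
  move=> ->; rewrite /=; have := weq_cancel' (Rq t) (sigmat h (GS T p a)) [::]; by rewrite cats0.
 have := weq_cancel (Rq t) P [::]; rewrite cats0 => H2'.
  apply: weq_trans H2'; exact: weq_cancel'.
rewrite /=; have := weq_cancel (Rq t) P [::]; by rewrite cats0.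
Qed.

End Conc.

Section S0.
Variables (T : finType) (RH : seq (word T)) (p : nat) (d : 'I_p -> T) (m : nat).

Lemma Fw0_H h (r : word T) :
  Fw (@delta0 T p m) (@sigma0 T p m) h [seq (GT p m l.1, l.2) | l <- r] = [::].
Proof. by elim: r h => //= [[g b] r IH] h; rewrite IH /emit /=; case: b. Qed.

Lemma step0HR r : relG RH d r ->
  Dw (@delta0 T p m) r = 0 /\ forall h, weq (@Rq T p m m) (Fw (@delta0 T p m) (@sigma0 T p m) h r) [::].
Proof.
move=> Hr; split; first exact: Dw0.
move=> h; case: Hr => [r' _|*|*|*|*|*|*|*|*|*|*|*|*|*|k k1 k0 H2 H0 H1];
  rewrite ?Fw0_H /= /emit /winv /=; try exact: weq_refl;
  try exact: (@weq_free _ (@Rq T p m m) [::] [::] _ true).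
have HR : @Rq T p m m [:: lti (GS T p k); lt (GS T p k0); lt (GS T p k); lti (GS T p k1)].
  by exists k, k1, k0; split => //; exact: ltn_ord.
exact: (@weq_rel _ (@Rq T p m m) [::] [::] _ HR).
Qed.
End S0.

Lemma Fw_pw2 (A : Type) (delta : A -> int) (sigma : int -> A -> word A) (g1 g2 : A) k1 k2 :
  (forall b, dl delta (g1, b) = 0 /\ emit delta sigma 0 (g1, b) = [:: (g1, b)]) ->
  (forall b, dl delta (g2, b) = 0 /\ emit delta sigma 0 (g2, b) = [:: (g2, b)]) ->
  Fw delta sigma 0 (pw g1 k1 ++ pw g2 k2) = pw g1 k1 ++ pw g2 k2.
Proof.
move=> H1 H2; rewrite Fw_cat /pw Dw_nseq; last by case: (H1 (k1 < 0)).
rewrite addr0 !Fw_nseq //; by [case: (H1 (k1 < 0)) | case: (H2 (k2 < 0))].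
Qed.

Lemma Dw_nseq' (A : Type) (delta : A -> int) l n : Dw delta (nseq n l) = n%:Z * dl delta l.
Proof. elim: n => [|n IH] /=; first by rewrite mul0r. by rewrite IH -addn1 PoszD mulrDl mul1r addrC. Qed.

Lemma Dw_pw (A : Type) (delta : A -> int) (g : A) k : Dw delta (pw g k) = k * delta g.
Proof. rewrite /pw Dw_nseq' /dl /=; case: ifP => H; lia. Qed.

Section Main.
Variables (T : Type) (p m : nat).
Notation G := (gen T p m).

Lemma iterstep (j : nat) (w : word G) (Hj : (1 <= j)%N)
  (Hw : forall t (x y : 'I_m), (j < t)%N -> Fw (@deltat T p m t) (@sigmat T p m t x y) 0 w = w) :
  forall n u, (j.+1 + n <= m)%N -> weq (@Rq T p m (j.+1 + n)) u w ->
  exists u', (size u' <= size u)%N /\ weq (@Rq T p m j.+1) u' w.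
Proof.
elim=> [|n IH] u Hm H; first by exists u; rewrite addn0 in H.
set t := (j.+1 + n)%N.
have Htm : (t < m)%N by rewrite /t; lia.
have H0m : (0 < m)%N by lia.
have Htm' : (t.-1 < m)%N by lia.
pose x := Ordinal H0m. pose y := Ordinal Htm'.
have Ht2 : (2 <= t)%N by rewrite /t; lia.
have HR := @stepHR T p m t x y erefl erefl Ht2.
have E : (j.+1 + n.+1 = t.+1)%N by rewrite /t addnS.
rewrite E in H.
have [_ /(_ 0) H'] := weq_F HR H.
rewrite Hw in H'; last by rewrite /t; lia.
have [u' [Hs Hu']] := IH _ (ltnW Htm) H'.
exists u'; split => //; apply: leq_trans Hs _.
apply: size_Fw; exact: sigmat_size.
Qed.

End Main.

Section Fin.
Variables (T : Type) (p m j : nat).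
Notation G := (gen T p m).
Hypothesis Hj : (1 <= j)%N.

Definition d1 (g : G) : int := if g is GS a then (if (val a < j)%N then 1 else 0) else 0.
Definition d2 (g : G) : int := if g is GS a then (if val a == j then 1 else 0) else 0.

Lemma dbound (u : word G) : `|Dw d1 u| + `|Dw d2 u| <= (size u)%:Z.
Proof.
elim: u => [|[g b] u IH] /=; first by [].
have : `|dl d1 (g, b)| + `|dl d2 (g, b)| <= 1.
  rewrite /dl /d1 /d2 /=; case: g => // a; case: b; repeat case: ifP => ?; lia.
move: IH; lia.
Qed.

Lemma finHR (dd : G -> int) :
  (dd = d1 \/ dd = d2) ->
  forall r, @Rq T p m j.+1 r -> Dw dd r = 0 /\
    forall h, weq (fun _ : word G => True) (Fw dd (fun _ _ => [::]) h r) [::].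
Proof.
move=> Hdd r [a [a1 [a0 [H2 Hlt H0 H1 ->]]]]; split.
  case: Hdd => -> /=; rewrite /dl /d1 /d2 /= H0 H1; repeat case: ifP => ?; lia.
move=> h; have := @weq_rel _ (fun _ : word G => True) [::] [::] (Fw dd (fun _ _ => [::]) h
  [:: lti (GS T p a); lt (GS T p a0); lt (GS T p a); lti (GS T p a1)]) I.
by rewrite cats0.
Qed.

Lemma final (i0 j0 : 'I_m) (Hi : (val i0 < j)%N) (Hj0 : val j0 = j) p' q u :
  weq (@Rq T p m j.+1) u (pw (GS T p i0) p' ++ pw (GS T p j0) q) ->
  (`|p'|%N + `|q|%N <= size u)%N.
Proof.
move=> H.
have [E1 _] := weq_F (finHR (or_introl erefl)) H.
have [E2 _] := weq_F (finHR (or_intror erefl)) H.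
rewrite Dw_cat !Dw_pw in E1; rewrite Dw_cat !Dw_pw in E2.
have e1 : d1 (GS T p i0) = 1 by rewrite /d1 Hi.
have e2 : d1 (GS T p j0) = 0 by rewrite /d1 Hj0 ltnn.
have e3 : d2 (GS T p i0) = 0 by rewrite /d2; case: eqP => // ?; lia.
have e4 : d2 (GS T p j0) = 1 by rewrite /d2 Hj0 eqxx.
rewrite e1 e2 in E1; rewrite e3 e4 in E2.
have := dbound u; rewrite E1 E2; lia.
Qed.

End Fin.

Theorem lemma3p4 (T : finType) (RH : seq (word T)) (p : nat) (d : 'I_p -> T)
  (Hfree : free_basis RH d) (m : nat) (i j : 'I_m) (Hij : (i < j)%N)
  (p' q : int) :
  is_word_length (@relG T RH p d m)
    (pw (GS T p i) p' ++ pw (GS T p j) q) (`|p'|%N + `|q|%N).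
Proof.
split.
  exists (pw (GS T p i) p' ++ pw (GS T p j) q); split; first exact: weq_refl.
  by rewrite size_cat !size_nseq.
move=> u Hu.
have Hij' : (val i < val j)%N := Hij.
set w := pw (GS T p i) p' ++ pw (GS T p j) q.
have [_ /(_ 0) H0] := weq_F (@step0HR T RH p d m) Hu.
have C0 : forall (a : 'I_m) b, dl (@delta0 T p m) (GS T p a, b) = 0 /\
   emit (@delta0 T p m) (@sigma0 T p m) 0 (GS T p a, b) = [:: (GS T p a, b)].
  by move=> a b; rewrite /dl /emit /delta0 /sigma0; case: b => //=; rewrite oppr0.
rewrite /w Fw_pw2 // in H0.
have Hs0 : (size (Fw (@delta0 T p m) (@sigma0 T p m) 0 u) <= size u)%N.
  by apply: size_Fw => h; case.
have Hj1 : (1 <= val j)%N by lia.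
have EK : ((val j).+1 + (m - (val j).+1))%N = m by rewrite subnKC // ltn_ord.
have Hw : forall t (x y : 'I_m), (val j < t)%N ->
    Fw (@deltat T p m t) (@sigmat T p m t x y) 0 w = w.
  move=> t x y Ht; have Ht2 : (nat_of_ord j < t)%N := Ht.
  have Cg : forall a : 'I_m, (nat_of_ord a < t)%N -> forall b,
      dl (@deltat T p m t) (GS T p a, b) = 0 /\
      emit (@deltat T p m t) (@sigmat T p m t x y) 0 (GS T p a, b) = [:: (GS T p a, b)].
    move=> a Ha b.
    have n1 : (nat_of_ord a == t) = false by lia.
    have n2 : (t <= nat_of_ord a)%N = false by lia.
    by rewrite /dl /emit /deltat /sigmat /= n1 n2; case: b => /=; rewrite ?subr0 ?oppr0 ?eqxx.
  by apply: Fw_pw2 => b; apply: Cg; rewrite /=; lia.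
have := @iterstep T p m (val j) w Hj1 Hw (m - (val j).+1)
  (Fw (@delta0 T p m) (@sigma0 T p m) 0 u); rewrite EK => /(_ (leqnn m) H0) [u1 [Hs1 H1]].
have := @final T p m (val j) Hj1 i j Hij erefl p' q u1 H1.
move=> Hf; apply: leq_trans Hf _; apply: leq_trans Hs1 Hs0.
Qed.
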